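(* Let $(\Omega,\mathcal F)$ be a measurable space with $\Sigma\neq\emptyset$, and let $v:\mathcal F\to\mathbb R$ be non-decreasing and submodular with $v(\emptyset)=0$. Then $v$ is continuous if and only if both of the following hold: (i) $\lim_{n\to\infty}v(A_n)=v(\bigcup_n A_n)$ for every sequence $A_1\subset A_2\subset\cdots$ in $\mathcal F$; (ii) $\lim_{n\to\infty}v(A_n)=v(\bigcap_n A_n)$ for every sequence $A_1\supset A_2\supset\cdots$ in $\mathcal F$.
   Context: $\Sigma$ denotes the set of all classes $\mathcal I\subset\mathcal F$ that are chains (totally ordered by inclusion), contain $\emptyset$ and $\Omega$, and generate $\mathcal F$ as a $\sigma$-algebra. $v$ is non-decreasing if $v(A)\le v(B)$ for $A\subset B$, submodular if $v(A)+v(B)\ge v(A\cup B)+v(A\cap B)$ for all $A,B\in\mathcal F$. For $\mathcal I\in\Sigma$ let $\mathcal J$ be the algebra generated by $\mathcal I$, whose elements are the sets $\bigcup_{i=1}^n (C_i\cap D_i^c)$ with $C_1\supset D_1\supset\cdots\supset C_n\supset D_n$ in $\mathcal I$; define $\mu_{v,\mathcal I}$ on $\mathcal J$ by $\mu_{v,\mathcal I}(\bigcup_{i=1}^n (C_i\cap D_i^c))=\sum_{i=1}^n(v(C_i)-v(D_i))$. A non-decreasing $v$ is called continuous if for every $\mathcal I\in\Sigma$ the finitely additive $\mu_{v,\mathcal I}$ is $\sigma$-additive on $\mathcal J$. *)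

(* Defs.v *)
From HB Require Import structures.
From mathcomp Require Import all_boot all_order all_algebra.
From mathcomp Require Import all_classical all_reals all_analysis.
Set Implicit Arguments. Unset Strict Implicit. Unset Printing Implicit Defensive.
Import Order.TTheory GRing.Theory Num.Theory numFieldNormedType.Exports.
Local Open Scope classical_set_scope.
Local Open Scope ring_scope.

Section Defs.
Context {d : measure_display} {T : measurableType d} {R : realType}.

Definition in_Sigma (I : set (set T)) : Prop :=
  I `<=` measurable /\
  (forall A B, I A -> I B -> A `<=` B \/ B `<=` A) /\
  I set0 /\ I setT /\
  <<s I >> = measurable.

Definition nondecreasing_cap (v : set T -> R) : Prop :=
  forall A B, measurable A -> measurable B -> A `<=` B -> v A <= v B.

Definition submodular (v : set T -> R) : Prop :=
  forall A B, measurable A -> measurable B ->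
    v (A `|` B) + v (A `&` B) <= v A + v B.

(* [rep_mu v I A r] : A = \bigcup_(i<n) (C_i \ D_i) with
   C_0 ⊇ D_0 ⊇ C_1 ⊇ D_1 ⊇ ... ⊇ C_{n-1} ⊇ D_{n-1} in I,
   and r = \sum_(i<n) (v C_i - v D_i) = mu_{v,I}(A) *)
Definition rep_mu (v : set T -> R) (I : set (set T)) (A : set T) (r : R) : Prop :=
  exists (n : nat) (C D : nat -> set T),
    (forall i, (i < n)%N -> I (C i) /\ I (D i)) /\
    (forall i, (i < n)%N -> D i `<=` C i) /\
    (forall i, (i.+1 < n)%N -> C i.+1 `<=` D i) /\
    A = \big[setU/set0]_(i < n) (C i `&` ~` D i) /\
    r = \sum_(i < n) (v (C i) - v (D i)).

(* A is in the algebra J generated by I *)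
Definition in_J (I : set (set T)) (A : set T) : Prop :=
  exists n (C D : nat -> set T),
    (forall i, (i < n)%N -> I (C i) /\ I (D i)) /\
    (forall i, (i < n)%N -> D i `<=` C i) /\
    (forall i, (i.+1 < n)%N -> C i.+1 `<=` D i) /\
    A = \big[setU/set0]_(i < n) (C i `&` ~` D i).

(* mu_{v,I} is sigma-additive on J (stated for every representation,
   mu_{v,I} being well defined on J) *)
Definition mu_sigma_additive (v : set T -> R) (I : set (set T)) : Prop :=
  forall (A : nat -> set T) (r : nat -> R) (s : R),
    (forall k, rep_mu v I (A k) (r k)) ->
    trivIset setT A ->
    rep_mu v I (\bigcup_k A k) s ->
    (fun N => \sum_(k < N) r k) @ \oo --> s.

Definition continuous_cap (v : set T -> R) : Prop :=
  forall I, in_Sigma I -> mu_sigma_additive v I.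

End Defs.

(* Main.v *)
Require Import Defs.
From HB Require Import structures.
From mathcomp Require Import all_boot all_order all_algebra.
From mathcomp Require Import all_classical all_reals all_analysis.
From mathcomp Require Import lra.
Import Order.TTheory GRing.Theory Num.Theory numFieldNormedType.Exports.
Local Open Scope classical_set_scope.
Local Open Scope ring_scope.


Definition gS {T} {R : realType} (s : seq (R * set T)) (x : T) : R :=
  \sum_(p <- s) p.1 * \1_(p.2) x.
Definition LS {T} {R : realType} (v : set T -> R) (s : seq (R * set T)) : R :=
  \sum_(p <- s) p.1 * v p.2.

Lemma chain_max T (R : realType) (I : set (set T))
  (hch : forall A B, I A -> I B -> A `<=` B \/ B `<=` A) (s : seq (R * set T)) :
  s != [::] -> (forall p, p \in s -> I p.2) ->
  exists2 p, p \in s & forall q, q \in s -> q.2 `<=` p.2.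
Proof.
elim: s => // p s IH _ hI.
have hIp : I p.2 by apply: hI; rewrite mem_head.
have hIs : forall q, q \in s -> I q.2.
  by move=> q hq; apply: hI; rewrite in_cons hq orbT.
case: (eqVneq s [::]) => [-> | sne].
  exists p; first by rewrite mem_head.
  by move=> q; rewrite mem_seq1 => /eqP ->.
have [m ms hm] := IH sne hIs.
case: (hch _ _ hIp (hIs _ ms)) => hpm.
- exists m; first by rewrite in_cons ms orbT.
  move=> q; rewrite in_cons => /orP[/eqP -> // | qs]; exact: hm.
- exists p; first by rewrite mem_head.
  move=> q; rewrite in_cons => /orP[/eqP -> // | qs].
  exact: subset_trans (hm _ qs) hpm.
Qed.
Arguments chain_max {T R I} hch {s}.


Lemma coreM d (T : measurableType d) (R : realType) (v : set T -> R) (I : set (set T))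
  (hIm : forall A, I A -> measurable A)
  (hch : forall A B, I A -> I B -> A `<=` B \/ B `<=` A)
  (hv0 : v set0 = 0) (hmono : nondecreasing_cap v) (hsub : submodular v) :
  forall n (s : seq (R * set T)), (size s <= n)%N -> (forall p, p \in s -> I p.2) ->
  forall Y, measurable Y -> (forall x, gS s x = \1_Y x) ->
  LS v s <= v Y /\
  (forall E, measurable E -> (forall p, p \in s -> p.2 `<=` E) ->
     v E - v (E `\` Y) <= LS v s).
Proof.
elim=> [|n IH] s.
  rewrite leqn0 => /nilP -> _ Y mY hg.
  have -> : Y = set0.
    apply/seteqP; split => x //= Yx.
    have := hg x; rewrite /gS big_nil indicE (mem_set Yx) => /eqP.
    by rewrite eq_sym oner_eq0.
  rewrite /LS big_nil hv0; split => [|E _ _]; [exact: lexx | by rewrite setD0 subrr].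
move=> hsz hI Y mY hg.
case: (eqVneq s [::]) => [sE | sne].
  by apply: IH => //; rewrite sE.
have [p0 p0s hmax] := chain_max hch sne hI.
have hperm := perm_to_rem p0s.
set r := rem p0 s in hperm.
have hszr : (size r <= n)%N.
  by move: hsz; rewrite (perm_size hperm).
have hrs : forall q, q \in r -> q \in s.
  by move=> q hq; rewrite (perm_mem hperm) in_cons hq orbT.
have hIr : forall q, q \in r -> I q.2 by move=> q /hrs /hI.
have gSe : forall x, gS s x = p0.1 * \1_(p0.2) x + gS r x.
  by move=> x; rewrite /gS (perm_big _ hperm) big_cons.
have LSe : LS v s = p0.1 * v p0.2 + LS v r.
  by rewrite /LS (perm_big _ hperm) big_cons.
have mE0 : measurable p0.2 by apply: hIm; apply: hI.
have hYE0 : Y `<=` p0.2.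
  move=> x Yx; apply: contrapT => nE0.
  have := hg x; rewrite indicE (mem_set Yx) /gS big1_seq.
    by move=> /eqP; rewrite eq_sym oner_eq0.
  move=> q /= qs; rewrite indicE memNset ?mulr0 //.
  by move=> hq; apply: nE0; apply: (hmax _ qs).
have subE : forall E, (forall p, p \in s -> p.2 `<=` E) ->
    forall q, q \in r -> q.2 `<=` E.
  by move=> E hE q /hrs /hE.
case: (pselect (p0.2 = set0)) => [E00 | E0ne].
  have hgr : forall x, gS r x = \1_Y x.
    by move=> x; rewrite -[RHS]hg gSe E00 indic0 mulr0 add0r.
  have [h1 h2] := IH r hszr hIr Y mY hgr.
  rewrite LSe E00 hv0 mulr0 add0r; split => // E mE hE.
  by apply: h2 => //; apply: subE.
case: (pselect (exists2 q, q \in r & q.2 = p0.2)) => [[q qr qE]| nA].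
  have hperm2 := perm_to_rem qr.
  set r' := rem q r in hperm2.
  pose s' := (p0.1 + q.1, p0.2) :: r'.
  have hr'r : forall z, z \in r' -> z \in r.
    by move=> z hz; rewrite (perm_mem hperm2) in_cons hz orbT.
  have gSr : forall x, gS r x = q.1 * \1_(q.2) x + gS r' x.
    by move=> x; rewrite /gS (perm_big _ hperm2) big_cons.
  have LSr : LS v r = q.1 * v q.2 + LS v r'.
    by rewrite /LS (perm_big _ hperm2) big_cons.
  have gSs' : forall x, gS s' x = gS s x.
    move=> x; rewrite gSe gSr qE /gS big_cons /=; lra.
  have LSs' : LS v s' = LS v s.
    rewrite LSe LSr qE /LS big_cons /=; lra.
  have hI' : forall z, z \in s' -> I z.2.
    move=> z; rewrite in_cons => /orP[/eqP -> /= | /hr'r /hIr //].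
    exact: hI.
  have hsz' : (size s' <= n)%N.
    by move: hszr; rewrite (perm_size hperm2).
  have [h1 h2] := IH s' hsz' hI' Y mY (fun x => etrans (gSs' x) (hg x)).
  rewrite -LSs'; split => // E mE hE; apply: h2 => //.
  move=> z; rewrite in_cons => /orP[/eqP -> /= | /hr'r zr]; first exact: hE.
  exact: subE.
have nB : forall q, q \in r -> q.2 <> p0.2 by move=> q qr e; apply: nA; exists q.
have [E' [mE' [E'E0 [hrE' [x0 [E0x0 nE'x0]]]]]] : exists E', measurable E' /\
    E' `<=` p0.2 /\ (forall q, q \in r -> q.2 `<=` E') /\
    exists x0, p0.2 x0 /\ ~ E' x0.
  case: (eqVneq r [::]) => [r0 | rne].
    exists set0; split => //; split => //; split; first by rewrite r0.
    case: (pselect (exists x, p0.2 x)) => [[x hx]|nx]; first by exists x; split.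
    exfalso; apply: E0ne; apply/seteqP; split => x // hx; apply: nx; by exists x.
  have [m mr hm] := chain_max hch rne hIr.
  exists m.2; split; first by apply: hIm; apply: hIr.
  have mE0' : m.2 `<=` p0.2 by apply: hmax; apply: hrs.
  split => //; split => //.
  case: (pselect (exists x, p0.2 x /\ ~ m.2 x)) => [//|nx].
  exfalso; apply: (nB _ mr); apply/seteqP; split => // x hx.
  by apply: contrapT => nm; apply: nx; exists x.
have gr0 : forall x, ~ E' x -> gS r x = 0.
  move=> x nx; rewrite /gS big1_seq // => q /= qr.
  by rewrite indicE memNset ?mulr0 // => hq; apply: nx; apply: (hrE' _ qr).
have ha0 : p0.1 = \1_Y x0.
  by rewrite -hg gSe gr0 // indicE (mem_set E0x0) mulr1 addr0.
case: (pselect (Y x0)) => Yx0; last first.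
  have a00 : p0.1 = 0 by rewrite ha0 indicE memNset.
  have hgr : forall x, gS r x = \1_Y x.
    by move=> x; rewrite -hg gSe a00 mul0r add0r.
  have [h1 h2] := IH r hszr hIr Y mY hgr.
  rewrite LSe a00 mul0r add0r; split => // E mE hE.
  by apply: h2 => //; apply: subE.
have a01 : p0.1 = 1 by rewrite ha0 indicE (mem_set Yx0).
pose rn := map (fun q : R * set T => (- q.1, q.2)) r.
have gSrn : forall x, gS rn x = - gS r x.
  by move=> x; rewrite /gS big_map -sumrN; apply: eq_bigr => q _ /=; rewrite mulNr.
have LSrn : LS v rn = - LS v r.
  by rewrite /LS big_map -sumrN; apply: eq_bigr => q _ /=; rewrite mulNr.
have hIrn : forall q, q \in rn -> I q.2.
  by move=> q /mapP [q' q'r ->] /=; apply: hIr.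
have hrnE' : forall q, q \in rn -> q.2 `<=` E'.
  by move=> q /mapP [q' q'r ->] /=; apply: hrE'.
have mY' : measurable (p0.2 `\` Y) by apply: measurableD.
have gY' : forall x, gS rn x = \1_(p0.2 `\` Y) x.
  move=> x; rewrite gSrn.
  have -> : gS r x = \1_Y x - \1_(p0.2) x by rewrite -hg gSe a01; lra.
  rewrite !indicE.
  case: (pselect (Y x)) => Yx.
    rewrite (mem_set Yx) (mem_set (hYE0 _ Yx)) memNset; first by rewrite subrr oppr0.
    by case.
  rewrite (memNset Yx).
  case: (pselect (p0.2 x)) => Ex.
    by rewrite (mem_set Ex) mem_set //= sub0r opprK.
  rewrite (memNset Ex) memNset ?subrr ?oppr0 //; by case.
have hszrn : (size rn <= n)%N by rewrite size_map.
have [h1 h2] := IH rn hszrn hIrn _ mY' gY'.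
have E0U : E' `|` Y = p0.2.
  apply/seteqP; split => x.
    by case=> [/E'E0 | /hYE0].
  move=> Ex; case: (pselect (E' x)) => hx; [by left | right].
  have := hg x; rewrite gSe gr0 // a01 indicE (mem_set Ex) mul1r addr0 indicE.
  by case: (pselect (Y x)) => // nY; rewrite memNset //= => /eqP; rewrite oner_eq0.
split.
  have := h2 E' mE' hrnE'.
  have -> : E' `\` (p0.2 `\` Y) = E' `&` Y.
    apply/seteqP; split => x /=.
      move=> [hx hn]; split => //; apply: contrapT => nY; apply: hn; split => //.
      exact: E'E0.
    by move=> [hx hY]; split => // -[].
  have := hsub E' Y mE' mY; rewrite E0U LSrn LSe a01; lra.
move=> E mE hE.
have E0E : p0.2 `<=` E by apply: hE.
have mEY : measurable (E `\` Y) by apply: measurableD.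
have := hsub p0.2 (E `\` Y) mE0 mEY.
have -> : p0.2 `|` (E `\` Y) = E.
  apply/seteqP; split => x; first by case=> [/E0E | []].
  move=> Ex; case: (pselect (p0.2 x)) => h; [by left | right; split => // /hYE0; exact: h].
have -> : p0.2 `&` (E `\` Y) = p0.2 `\` Y.
  apply/seteqP; split => x /=; first by case=> ? [].
  by case=> h1' h2'; split => //; split => //; apply: E0E.
move: h1; rewrite LSrn LSe a01; lra.
Qed.
Arguments coreM {d T R v I}.


Fixpoint sR {T} {R : realType} (n : nat) (C D : nat -> set T) : seq (R * set T) :=
  if n is n'.+1 then (1, C 0%N) :: (-1, D 0%N) :: sR n' (fun i => C i.+1) (fun i => D i.+1)
  else [::].

Lemma rep_list T (R : realType) (v : set T -> R) (I : set (set T)) :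
  forall n (C D : nat -> set T),
  (forall i, (i < n)%N -> I (C i) /\ I (D i)) ->
  (forall i, (i < n)%N -> D i `<=` C i) ->
  (forall i, (i.+1 < n)%N -> C i.+1 `<=` D i) ->
  [/\ (forall p, p \in sR (R:=R) n C D -> I p.2),
      (forall x, gS (sR (R:=R) n C D) x = \1_(\big[setU/set0]_(i < n) (C i `&` ~` D i)) x),
      LS v (sR n C D) = \sum_(i < n) (v (C i) - v (D i)) &
      \big[setU/set0]_(i < n) (C i `&` ~` D i) `<=` C 0%N].
Proof.
elim=> [|n IH] C D hI hDC hCD.
  split => //; first by move=> x; rewrite big_ord0 /gS big_nil indic0.
  - by rewrite /LS big_nil big_ord0.
  - by rewrite big_ord0.
have [h1 h2 h3 h4] := IH (fun i => C i.+1) (fun i => D i.+1)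
  (fun i hi => hI i.+1 hi) (fun i hi => hDC i.+1 hi) (fun i hi => hCD i.+1 hi).
have eU : \big[setU/set0]_(i < n.+1) (C i `&` ~` D i) =
    (C 0%N `&` ~` D 0%N) `|` \big[setU/set0]_(i < n) (C i.+1 `&` ~` D i.+1).
  by rewrite big_ord_recl; congr (_ `|` _); apply: eq_bigr => i _; rewrite lift0.
have [IC0 ID0] := hI 0%N (ltn0Sn n).
have D0C0 := hDC 0%N (ltn0Sn n).
have UD0 : \big[setU/set0]_(i < n) (C i.+1 `&` ~` D i.+1) `<=` D 0%N.
  case: n {IH hI hDC eU h1 h2 h3} h4 hCD => [|n] h4 hCD.
    by rewrite big_ord0.
  by apply: subset_trans h4 _; apply: hCD.
split.
- move=> p; rewrite !in_cons => /orP[/eqP -> //|/orP[/eqP -> //|]]; exact: h1.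
- move=> x; rewrite /gS !big_cons -/(gS _ x) h2 eU !indicE /=.
  case: (pselect (C 0%N x)) => hC; last first.
    rewrite (memNset hC) memNset; last by move=> /D0C0.
    rewrite memNset; last by move=> /UD0 /D0C0.
    rewrite memNset; last by case=> [[]|/UD0 /D0C0].
    rewrite /= ?mulr0n ?mulr1n; lra.
  case: (pselect (D 0%N x)) => hD.
    rewrite (mem_set hC) (mem_set hD).
    case: (pselect ((\big[setU/set0]_(i < n) (C i.+1 `&` ~` D i.+1)) x)) => hU.
      rewrite (mem_set hU) mem_set /=; [rewrite ?mulr0n ?mulr1n; lra | by right].
    rewrite (memNset hU) memNset /=; [rewrite ?mulr0n ?mulr1n; lra|].
    by case=> [[_ ]|].
  rewrite (mem_set hC) (memNset hD) memNset; last by move=> /UD0.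
  rewrite mem_set /=; [rewrite ?mulr0n ?mulr1n; lra | by left].
- rewrite /LS !big_cons -/(LS v _) h3 big_ord_recl.
  have -> : \sum_(i < n) (v (C (lift ord0 i)) - v (D (lift ord0 i))) =
    \sum_(i < n) (v (C i.+1) - v (D i.+1)) by apply: eq_bigr => i _; rewrite lift0.
  rewrite /=; lra.
- rewrite eU => x [[]//|/UD0]; exact: D0C0.
Qed.
Arguments rep_list {T R} v {I n C D}.


Definition negS {T} {R : realType} (s : seq (R * set T)) : seq (R * set T) :=
  map (fun q : R * set T => (- q.1, q.2)) s.

Lemma gS_neg T (R : realType) (s : seq (R * set T)) x : gS (negS s) x = - gS s x.
Proof. by rewrite /gS big_map -sumrN; apply: eq_bigr => q _ /=; rewrite mulNr. Qed.
Lemma LS_neg T (R : realType) v (s : seq (R * set T)) : LS v (negS s) = - LS v s.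
Proof. by rewrite /LS big_map -sumrN; apply: eq_bigr => q _ /=; rewrite mulNr. Qed.
Lemma gS_cat T (R : realType) (s1 s2 : seq (R * set T)) x : gS (s1 ++ s2) x = gS s1 x + gS s2 x.
Proof. by rewrite /gS big_cat. Qed.
Lemma LS_cat T (R : realType) v (s1 s2 : seq (R * set T)) : LS v (s1 ++ s2) = LS v s1 + LS v s2.
Proof. by rewrite /LS big_cat. Qed.

Fixpoint Lst {T} {R : realType} (s0 : seq (R * set T)) (F : nat -> seq (R * set T)) N :=
  if N is N'.+1 then Lst s0 F N' ++ negS (F N') else s0.

Lemma backward d (T : measurableType d) (R : realType) (v : set T -> R) :
  nondecreasing_cap v -> submodular v -> v set0 = 0 ->
  (forall A : nat -> set T, (forall n, measurable (A n)) ->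
       (forall n, A n.+1 `<=` A n) ->
       (fun n => v (A n)) @ \oo --> v (\bigcap_n A n)) ->
  continuous_cap v.
Proof.
move=> hmono hsub hv0 hdec Ic [hIm [hch _]] A r s hrep htriv hrepU.
have : forall k, exists t : nat * (nat -> set T) * (nat -> set T),
  [/\ (forall i, (i < t.1.1)%N -> Ic (t.1.2 i) /\ Ic (t.2 i)),
      (forall i, (i < t.1.1)%N -> t.2 i `<=` t.1.2 i),
      (forall i, (i.+1 < t.1.1)%N -> t.1.2 i.+1 `<=` t.2 i),
      A k = \big[setU/set0]_(i < t.1.1) (t.1.2 i `&` ~` t.2 i) &
      r k = \sum_(i < t.1.1) (v (t.1.2 i) - v (t.2 i))].
  move=> k; have [nn [C [D [h1 [h2 [h3 [h4 h5]]]]]]] := hrep k.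
  by exists (nn, C, D).
move=> /choice [f hf].
have [m [C [D [hU1 [hU2 [hU3 [hU4 hU5]]]]]]] := hrepU.
pose U := \bigcup_k A k.
have mA : forall k, measurable (A k).
  move=> k; have [_ _ _ -> _] := hf k.
  apply: bigsetU_measurable => i _; apply: measurableI.
    by apply: hIm; have [h _ _ _ _] := hf k; have [] := h i (ltn_ord i).
  by apply: measurableC; apply: hIm; have [h _ _ _ _] := hf k; have [] := h i (ltn_ord i).
have mU : measurable U by apply: bigcupT_measurable.
pose F k := sR (R:=R) (f k).1.1 (f k).1.2 (f k).2.
pose L N := Lst (sR (R:=R) m C D) F N.
have [hL1 hL2 hL3 _] := rep_list v hU1 hU2 hU3.
have hL : forall N, [/\ (forall p, p \in L N -> Ic p.2),
    (forall x, gS (L N) x = \1_U x - \sum_(k < N) \1_(A k) x) &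
    LS v (L N) = s - \sum_(k < N) r k].
  elim=> [|N [IH1 IH2 IH3]].
    split => //.
    - by move=> x; rewrite big_ord0 subr0 /L /= hL2 -hU4.
    - by rewrite big_ord0 subr0 /L /= hL3 hU5.
  have [h1 h2 h3 h4 h5] := hf N.
  have [k1 k2 k3 _] := rep_list v h1 h2 h3.
  split.
  - move=> p; rewrite /L /= mem_cat => /orP[|]; first exact: IH1.
    by move=> /mapP [q qF ->] /=; apply: k1.
  - move=> x; rewrite /L /= gS_cat IH2 gS_neg k2 -h4 big_ord_recr /=; lra.
  - rewrite /L /= LS_cat IH3 LS_neg k3 -h5 big_ord_recr /=; lra.
pose Y N := U `\` \big[setU/set0]_(k < N) A k.
have mY : forall N, measurable (Y N).
  by move=> N; apply: measurableD => //; apply: bigsetU_measurable.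
have AY : forall N, A N `<=` Y N.
  move=> N x Ax; split; first by exists N.
  rewrite -bigcup_mkord => -[k /= kN Akx].
  have := htriv k N I I (ex_intro _ x (conj Akx Ax)).
  by move=> e; move: kN; rewrite e ltnn.
have YS : forall N, Y N.+1 = Y N `\` A N.
  by move=> N; rewrite /Y big_ord_recr /= setDDl.
have hY : forall N x, (\1_(Y N) x : R) = \1_U x - \sum_(k < N) \1_(A k) x.
  elim=> [|N IH] x.
    by rewrite /Y big_ord0 big_ord0 setD0 subr0.
  rewrite YS big_ord_recr /= opprD addrA -IH !indicE.
  case: (pselect (A N x)) => hA.
    rewrite (mem_set hA) (mem_set (AY _ _ hA)) memNset /=; last by case.
    by rewrite subrr.
  rewrite (memNset hA) /= subr0.
  case: (pselect (Y N x)) => hy.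
    by rewrite !mem_set.
  by rewrite !memNset // => -[].
have bnd : forall N, 0 <= s - \sum_(k < N) r k <= v (Y N).
  move=> N; have [h1 h2 h3] := hL N.
  have hg : forall x, gS (L N) x = \1_(Y N) x by move=> x; rewrite h2 hY.
  have [c1 c2] := coreM hIm hch hv0 hmono hsub _ _ (leqnn _) h1 _ (mY N) hg.
  rewrite -h3; apply/andP; split => //.
  have := c2 setT measurableT (fun _ _ _ _ => I).
  have := hmono (setT `\` Y N) setT (measurableD measurableT (mY N)) measurableT (fun _ _ => I).
  lra.
have Ydec : forall N, Y N.+1 `<=` Y N by move=> N; rewrite YS => x [].
have Ycap : \bigcap_N Y N = set0.
  apply/seteqP; split => x // hx.
  have [k _ Akx] : U x by have [] := hx 0%N I.
  have [_] := hx k.+1 I; apply; rewrite big_ord_recr /=; by right.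
have cY := hdec Y mY Ydec; rewrite Ycap hv0 in cY.
have c0 : (fun N => s - \sum_(k < N) r k) @ \oo --> 0.
  apply: (squeeze_cvgr _ (cvg_cst 0) cY).
  by apply: nearW => N; exact: bnd.
apply/(subr_cvg0 (fun N => \sum_(k < N) r k) s).
have e : (fun N => \sum_(k < N) r k - s) = (- (fun N => s - \sum_(k < N) r k)).
  by apply/funext => N /=; rewrite opprB.
rewrite e; have := cvgN c0; rewrite oppr0; exact.
Qed.


Lemma sgC T (G : set (set T)) A : <<s G >> A -> <<s G >> (~` A).
Proof. by rewrite -setTD; apply: sigma_algebraCD. Qed.

Lemma sgU T (G : set (set T)) A B : <<s G >> A -> <<s G >> B -> <<s G >> (A `|` B).
Proof.
move=> hA hB; rewrite -bigcup2E; apply: sigma_algebra_bigcup => -[|[|i]] //=.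
exact: sigma_algebra0.
Qed.

Lemma sgD T (G : set (set T)) A B : <<s G >> A -> <<s G >> B -> <<s G >> (A `\` B).
Proof.
move=> hA hB; have -> : A `\` B = ~` (~` A `|` B) by rewrite setCU setCK.
by apply: sgC; apply: sgU => //; apply: sgC.
Qed.

Lemma mono_sub T (B : nat -> set T) : (forall n, B n `<=` B n.+1) ->
  forall i j, (i <= j)%N -> B i `<=` B j.
Proof.
move=> hB i; elim=> [|j IH]; first by rewrite leqn0 => /eqP ->.
rewrite leq_eqVlt => /orP[/eqP -> //|]; rewrite ltnS => /IH h.
exact: subset_trans h (hB j).
Qed.
Arguments mono_sub {T B} hB {i j}.

Lemma first_in T (B : nat -> set T) : B 0%N = set0 ->
  forall n x, B n x -> exists k, B k.+1 x /\ ~ B k x.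
Proof.
move=> B0; elim=> [|n IH] x; first by rewrite B0.
move=> hx; case: (pselect (B n x)) => h; first exact: IH.
by exists n.
Qed.
Arguments first_in {T B}.

Lemma pieces_triv T (B : nat -> set T) : (forall n, B n `<=` B n.+1) ->
  trivIset setT (fun k => B k.+1 `\` B k).
Proof.
move=> hB i j _ _ [x [[h1 h2] [h3 h4]]].
case: (ssrnat.ltngtP i j) => // h.
- have hh := mono_sub hB h; by case: (h4 (hh _ h1)).
- have hh := mono_sub hB h; by case: (h2 (hh _ h3)).
Qed.

Lemma pieces_union T (B : nat -> set T) : B 0%N = set0 ->
  \bigcup_k (B k.+1 `\` B k) = \bigcup_k B k.
Proof.
move=> B0; apply/seteqP; split => x.
  by move=> [k _ [h _]]; exists k.+1.
move=> [n _ hn]; have [k [h1 h2]] := first_in B0 _ _ hn.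
by exists k.
Qed.

Lemma one_rep d (T : measurableType d) (R : realType) (v : set T -> R) (I : set (set T)) C D :
  I C -> I D -> D `<=` C -> rep_mu v I (C `\` D) (v C - v D).
Proof.
move=> hC hD hDC; exists 1%N, (fun _ => C), (fun _ => D).
by rewrite !big_ord1.
Qed.

Lemma compl_sigma d (T : measurableType d) (I : set (set T)) :
  in_Sigma I -> in_Sigma [set ~` E | E in I].
Proof.
move=> [hIm [hch [h0 [hT hgen]]]]; split.
  by move=> _ [E hE <-]; apply: measurableC; apply: hIm.
split.
  move=> _ _ [E1 h1 <-] [E2 h2 <-].
  by case: (hch _ _ h1 h2) => s; [right|left]; apply: subsetC.
split; first by exists setT => //; rewrite setCT.
split; first by exists set0 => //; rewrite setC0.
apply/seteqP; split.
  rewrite -hgen; apply: smallest_sub; first exact: smallest_sigma_algebra.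
  by move=> _ [E hE <-]; apply: sgC; apply: sub_sigma_algebra.
rewrite -{1}hgen; apply: smallest_sub; first exact: smallest_sigma_algebra.
move=> E hE; rewrite -(setCK E); apply: sgC; apply: sub_sigma_algebra.
by exists E.
Qed.

Lemma chain_incr d (T : measurableType d) (I0 : set (set T)) (B : nat -> set T) :
  in_Sigma I0 -> (forall n, measurable (B n)) -> (forall n, B n `<=` B n.+1) ->
  B 0%N = set0 ->
  exists I, [/\ in_Sigma I, (forall n, I (B n)) & I (\bigcup_n B n)].
Proof.
move=> [hIm [hch [h0 [hT hgen]]]] mB hB B0.
pose Bu := \bigcup_n B n.
have BBu : forall n, B n `<=` Bu by move=> n x hx; exists n.
pose I := fun E => (exists n C, I0 C /\ E = B n `|` (C `&` B n.+1)) \/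
                   (exists C, I0 C /\ E = Bu `|` C).
have sub1 : forall n C, B n `|` (C `&` B n.+1) `<=` B n.+1.
  by move=> n C x [/hB|[]].
exists I; split.
- split.
    move=> E [[n [C [hC ->]]]|[C [hC ->]]].
      by apply: measurableU => //; apply: measurableI => //; apply: hIm.
    apply: measurableU; last exact: hIm.
    exact: bigcupT_measurable.
  split.
    move=> E1 E2 [[n1 [C1 [h1 ->]]]|[C1 [h1 ->]]] [[n2 [C2 [h2 ->]]]|[C2 [h2 ->]]].
    + case: (ssrnat.ltngtP n1 n2) => [lt|gt|<-].
      * left; apply: subset_trans (sub1 _ _) _.
        by apply: subset_trans (mono_sub hB lt) _ => x hx; left.
      * right; apply: subset_trans (sub1 _ _) _.
        by apply: subset_trans (mono_sub hB gt) _ => x hx; left.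
      * by case: (hch _ _ h1 h2) => s; [left|right]; apply: setUS; apply: setSI.
    + left; apply: subset_trans (sub1 _ _) _.
      by apply: subset_trans (BBu _) _ => x hx; left.
    + right; apply: subset_trans (sub1 _ _) _.
      by apply: subset_trans (BBu _) _ => x hx; left.
    + by case: (hch _ _ h1 h2) => s; [left|right]; apply: setUS.
  split; first by left; exists 0%N, set0; split => //; rewrite B0 set0I setU0.
  split; first by right; exists setT; split => //; rewrite setUT.
  apply/seteqP; split.
    rewrite -hgen; apply: smallest_sub; first exact: smallest_sigma_algebra.
    rewrite hgen => E [[n [C [hC ->]]]|[C [hC ->]]].
      by apply: measurableU => //; apply: measurableI => //; apply: hIm.
    apply: measurableU; last exact: hIm.
    exact: bigcupT_measurable.
  rewrite -{1}hgen; apply: smallest_sub; first exact: smallest_sigma_algebra.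
  move=> C hC.
  have -> : C = (\bigcup_n ((B n `|` (C `&` B n.+1)) `\` B n)) `|` ((Bu `|` C) `\` Bu).
    apply/seteqP; split => x.
      move=> Cx; case: (pselect (Bu x)) => [[n _ hn]|nB]; last by right; split => //; right.
      have [k [h1 h2]] := first_in B0 _ _ hn.
      by left; exists k => //; split => //; right.
    case=> [[n _ [[h1|[]] h2]]|[[h1|h1] h2]] //.
  apply: sgU.
    apply: sigma_algebra_bigcup => n; apply: sgD; apply: sub_sigma_algebra.
      by left; exists n, C.
    by left; exists n, set0; split => //; rewrite set0I setU0.
  by apply: sgD; apply: sub_sigma_algebra; right; [exists C | exists set0; split => //; rewrite setU0].
- by move=> n; left; exists n, set0; split => //; rewrite set0I setU0.
- by right; exists set0; split => //; rewrite setU0.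
Qed.
Arguments chain_incr {d T I0 B}.
Arguments compl_sigma {d T I}.
Arguments pieces_union {T B}.
Arguments pieces_triv {T B}.


Lemma fwd_incr d (T : measurableType d) (R : realType) (v : set T -> R) :
  (exists I : set (set T), in_Sigma I) -> v set0 = 0 -> continuous_cap v ->
  forall A : nat -> set T, (forall n, measurable (A n)) ->
       (forall n, A n `<=` A n.+1) ->
       (fun n => v (A n)) @ \oo --> v (\bigcup_n A n).
Proof.
move=> [I0 hI0] hv0 cont A mA hA.
pose B n := if n is k.+1 then A k else set0.
have B0 : B 0%N = set0 by [].
have mB : forall n, measurable (B n) by case=> [|n]; [exact: measurable0 | exact: mA].
have hB : forall n, B n `<=` B n.+1 by case=> [|n] //=; apply: hA.
have [I [hI hBI hBu]] := chain_incr hI0 mB hB B0.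
have hIs : forall k, rep_mu v I (B k.+1 `\` B k) (v (B k.+1) - v (B k)).
  by move=> k; apply: one_rep.
have hIU : rep_mu v I (\bigcup_k (B k.+1 `\` B k)) (v (\bigcup_n B n) - v set0).
  rewrite pieces_union //; rewrite -{1}(setD0 (\bigcup_n B n)); apply: one_rep => //.
  by case: hI => [_ [_ []]].
have h := cont I hI _ _ _ hIs (pieces_triv hB) hIU.
have e : (fun N => \sum_(k < N) (v (B k.+1) - v (B k))) = (fun N => v (B N)).
  apply/funext; elim=> [|N IH]; first by rewrite big_ord0 B0 hv0.
  by rewrite big_ord_recr /= IH; lra.
have eU : \bigcup_n B n = \bigcup_n A n.
  apply/seteqP; split => x; first by case=> -[|n] _ //= hx; exists n.
  by case=> n _ hx; exists n.+1.
rewrite e hv0 subr0 eU in h.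
by rewrite -cvg_shiftS in h.
Qed.

Lemma fwd_decr d (T : measurableType d) (R : realType) (v : set T -> R) :
  (exists I : set (set T), in_Sigma I) -> v set0 = 0 -> continuous_cap v ->
  forall A : nat -> set T, (forall n, measurable (A n)) ->
       (forall n, A n.+1 `<=` A n) ->
       (fun n => v (A n)) @ \oo --> v (\bigcap_n A n).
Proof.
move=> [I0 hI0] hv0 cont A mA hA.
pose B n := if n is k.+1 then ~` A k else set0.
have B0 : B 0%N = set0 by [].
have mB : forall n, measurable (B n) by case=> [|n]; [exact: measurable0 | apply: measurableC; exact: mA].
have hB : forall n, B n `<=` B n.+1 by case=> [|n] //=; apply: subsetC.
have [I [hI hBI hBu]] := chain_incr hI0 mB hB B0.
pose I' := [set ~` E | E in I].
have hI' := compl_sigma hI.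
have hIs : forall k, rep_mu v I' (~` B k `\` ~` B k.+1) (v (~` B k) - v (~` B k.+1)).
  move=> k; apply: one_rep; [by exists (B k) | by exists (B k.+1) | exact: subsetC].
have eP : (fun k => ~` B k `\` ~` B k.+1) = (fun k => B k.+1 `\` B k).
  by apply/funext => k; rewrite !setDE setCK setIC.
have hIU : rep_mu v I' (\bigcup_k (~` B k `\` ~` B k.+1))
    (v setT - v (~` (\bigcup_n B n))).
  have hr : rep_mu v I' (setT `\` ~` (\bigcup_n B n)) (v setT - v (~` (\bigcup_n B n))).
    apply: one_rep; [by case: hI' => [_ [_ [_ []]]] | by exists (\bigcup_n B n) | by []].
  rewrite setTD setCK in hr.
  rewrite eP (pieces_union B0); exact: hr.
have htr : trivIset setT (fun k => ~` B k `\` ~` B k.+1).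
  by rewrite eP; apply: pieces_triv.
have h := cont I' hI' _ _ _ hIs htr hIU.
have e : (fun N => \sum_(k < N) (v (~` B k) - v (~` B k.+1))) =
         (fun N => v setT - v (~` B N)).
  apply/funext; elim=> [|N IH]; first by rewrite big_ord0 B0 setC0; lra.
  by rewrite big_ord_recr /= IH; lra.
rewrite e in h.
have h2 : (fun N => v setT - (v setT - v (~` B N))) @ \oo -->
          v setT - (v setT - v (~` (\bigcup_n B n))) := cvgB (cvg_cst _) h.
have e2 : (fun N => v setT - (v setT - v (~` B N))) = (fun N => v (~` B N)).
  by apply/funext => N; lra.
have e3 : v setT - (v setT - v (~` (\bigcup_n B n))) = v (~` (\bigcup_n B n)) by lra.
rewrite e2 e3 in h2.
have eU : ~` (\bigcup_n B n) = \bigcap_n A n.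
  apply/seteqP; split => x.
    move=> hx n _; apply: contrapT => nA; apply: hx; by exists n.+1.
  by move=> hx [[|n] _ hn] //=; apply: hn; exact: hx n Logic.I.
rewrite eU -cvg_shiftS in h2.
have eA : (fun n => v (~` B n.+1)) = (fun n => v (A n)).
  by apply/funext => n /=; rewrite setCK.
rewrite -eA; exact: h2.
Qed.

Theorem proposition2 (d : measure_display) (T : measurableType d) (R : realType)
  (v : set T -> R) :
  (exists I : set (set T), in_Sigma I) ->
  nondecreasing_cap v -> submodular v -> v set0 = 0 ->
  (continuous_cap v <->
   ((forall A : nat -> set T, (forall n, measurable (A n)) ->
       (forall n, A n `<=` A n.+1) ->
       (fun n => v (A n)) @ \oo --> v (\bigcup_n A n)) /\
    (forall A : nat -> set T, (forall n, measurable (A n)) ->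
       (forall n, A n.+1 `<=` A n) ->
       (fun n => v (A n)) @ \oo --> v (\bigcap_n A n)))).
Proof.
move=> hex hmono hsub hv0; split.
  move=> cont; split; [exact: fwd_incr | exact: fwd_decr].
by move=> [_ hdec]; exact: backward.
Qed.
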